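(* Let $n\ge 4$ and let $\mathcal M$ be an IP-SEG representation of the chordless cycle $C_n$ containing at least one interval segment. Then either $\mathcal M$ has exactly one interval arc, or $\mathcal M$ has exactly two interval arcs and these lie on different lines (one on $L_1$ and one on $L_2$).
   Context: Let $L_1$ and $L_2$ be two distinct parallel horizontal lines in the plane. A closed straight line segment is an interval segment if both of its endpoints lie on the same line $L_i$, and a permutation segment if one endpoint lies on $L_1$ and the other on $L_2$. An IP-SEG model is a finite family of interval and permutation segments; its intersection graph has one vertex per segment, adjacent iff the segments intersect. For $m\ge 3$, $C_m$ is the chordless cycle on $v_1,\dots,v_m$ with $v_i$ adjacent to $v_{i+1}$ (indices mod $m$) and no other edges. An IP-SEG representation of $C_m$ is an IP-SEG model with segments $s(v_1),\dots,s(v_m)$ whose intersection graph is $C_m$ with $s(v_i)$ corresponding to $v_i$. If such a representation contains both interval and permutation segments, an interval arc is a maximal sequence of cyclically consecutive segments $s(v_i),\dots,s(v_j)$ that are all interval segments (all segments of an interval arc lie on the same line). *)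

(* Defs.v *)
From HB Require Import structures.
From mathcomp Require Import all_boot all_order all_algebra.
Set Implicit Arguments. Unset Strict Implicit. Unset Printing Implicit Defensive.
Import Order.TTheory GRing.Theory Num.Theory.
Local Open Scope ring_scope.

Definition point (R : realFieldType) := (R * R)%type.
Definition segment (R : realFieldType) := (point R * point R)%type.

Definition on_seg (R : realFieldType) (a b p : point R) : Prop :=
  exists t : R, 0 <= t <= 1 /\
    p.1 = (1 - t) * a.1 + t * b.1 /\ p.2 = (1 - t) * a.2 + t * b.2.

Definition seg_meet (R : realFieldType) (s1 s2 : segment R) : Prop :=
  exists p : point R, on_seg s1.1 s1.2 p /\ on_seg s2.1 s2.2 p.

(* The lines L_1 : y = h1 and L_2 : y = h2 (distinct horizontal lines). *)
Definition interval_on (R : realFieldType) (h : R) (s : segment R) : Prop :=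
  s.1.2 = h /\ s.2.2 = h.

Definition is_interval_seg (R : realFieldType) (h1 h2 : R) (s : segment R) : Prop :=
  interval_on h1 s \/ interval_on h2 s.

Definition is_permutation_seg (R : realFieldType) (h1 h2 : R) (s : segment R) : Prop :=
  (s.1.2 = h1 /\ s.2.2 = h2) \/ (s.1.2 = h2 /\ s.2.2 = h1).

(* adjacency in the chordless cycle C_n on vertices 'I_n (v_{i+1} <-> i) *)
Definition cycle_adj (n : nat) (i j : 'I_n) : Prop :=
  j = ordS i \/ i = ordS j.

Definition IPSEG_rep_cycle (R : realFieldType) (h1 h2 : R) (n : nat)
    (s : 'I_n -> segment R) : Prop :=
  (forall i, is_interval_seg h1 h2 (s i) \/ is_permutation_seg h1 h2 (s i)) /\
  (forall i j : 'I_n, i <> j -> (seg_meet (s i) (s j) <-> cycle_adj i j)).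

Definition interval_arc (R : realFieldType) (h1 h2 : R) (n : nat)
    (s : 'I_n -> segment R) (A : {set 'I_n}) : Prop :=
  exists (i : 'I_n) (k : nat),
    (k < n)%N /\
    A = [set iter j (@ordS n) i | j : 'I_k.+1] /\
    (forall x, x \in A -> is_interval_seg h1 h2 (s x)) /\
    ~ is_interval_seg h1 h2 (s (ord_pred i)) /\
    ~ is_interval_seg h1 h2 (s (iter k.+1 (@ordS n) i)).

(* Main.v *)
Require Import Defs.
From HB Require Import structures.
From mathcomp Require Import all_boot all_order all_algebra.
From mathcomp Require Import ring lra zify.
From Stdlib Require Import Classical.
Import Order.TTheory GRing.Theory Num.Theory.
Set Implicit Arguments. Unset Strict Implicit. Unset Printing Implicit Defensive.
Local Open Scope ring_scope.

Definition tau (R : realFieldType) (h1 h2 : R) (p : point R) : R :=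
  (p.2 - h1) / (h2 - h1).
Definition gsep (R : realFieldType) (h1 h2 b t : R) (p : point R) : R :=
  p.1 - b - (t - b) * tau h1 h2 p.
Definition instrip (R : realFieldType) (h1 h2 : R) (p : point R) :=
  p.2 = h1 \/ p.2 = h2.

Lemma tau_comb (R : realFieldType) (h1 h2 : R) (a c p : point R) t :
  h1 != h2 -> p.2 = (1 - t) * a.2 + t * c.2 ->
  tau h1 h2 p = (1 - t) * tau h1 h2 a + t * tau h1 h2 c.
Proof.
move=> h12 hy; rewrite /tau hy.
have hd : h2 - h1 != 0 by rewrite subr_eq0 eq_sym.
by field.
Qed.

Lemma gsep_comb (R : realFieldType) (h1 h2 b t0 : R) (a c p : point R) t :
  h1 != h2 -> p.1 = (1 - t) * a.1 + t * c.1 -> p.2 = (1 - t) * a.2 + t * c.2 ->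
  gsep h1 h2 b t0 p = (1 - t) * gsep h1 h2 b t0 a + t * gsep h1 h2 b t0 c.
Proof.
move=> h12 hx hy; rewrite /gsep (tau_comb h12 hy) hx.
by ring.
Qed.

Lemma tau_strip (R : realFieldType) (h1 h2 : R) (p : point R) :
  h1 != h2 -> instrip h1 h2 p -> tau h1 h2 p = 0 \/ tau h1 h2 p = 1.
Proof.
rewrite /tau => h12 [] ->; [left|right].
  by rewrite subrr mul0r.
by rewrite divff // subr_eq0 eq_sym.
Qed.

Lemma on_seg_tau (R : realFieldType) (h1 h2 : R) (a c p : point R) :
  h1 != h2 -> instrip h1 h2 a -> instrip h1 h2 c -> on_seg a c p ->
  0 <= tau h1 h2 p <= 1.
Proof.
move=> h12 ha hc [t [/andP [t0 t1] [hx hy]]].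
rewrite (tau_comb h12 hy).
case: (tau_strip h12 ha) => ->; case: (tau_strip h12 hc) => ->;
apply/andP; split; lra.
Qed.

Lemma on_sep (R : realFieldType) (h1 h2 b t : R) (p : point R) :
  h1 != h2 -> 0 <= tau h1 h2 p <= 1 -> gsep h1 h2 b t p = 0 ->
  on_seg (b, h1) (t, h2) p.
Proof.
move=> h12 ht hg; exists (tau h1 h2 p); split => //=; split.
  move: hg; rewrite /gsep => hg.
  have -> : p.1 = p.1 - b - (t - b) * tau h1 h2 p + b + (t-b) * tau h1 h2 p by ring.
  by rewrite hg; ring.
have hd : h2 - h1 != 0 by rewrite subr_eq0 eq_sym.
rewrite /tau; by field.
Qed.

Lemma crossing (R : realFieldType) (ga gc : R) :
  ga * gc < 0 -> exists t, 0 <= t <= 1 /\ (1 - t) * ga + t * gc = 0.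
Proof.
move=> h.
have hd : ga - gc != 0.
  apply/negP => /eqP e; have : gc = ga by lra.
  move=> E; rewrite E in h; nra.
exists (ga / (ga - gc)); split; last by field.
case: (ltrgt0P ga) => hga.
- have hgc : gc < 0 by rewrite -(pmulr_rlt0 _ hga).
  have hp : 0 < ga - gc by lra.
  apply/andP; split; first by apply: divr_ge0; lra.
  by rewrite ler_pdivrMr // mul1r; lra.
- have hgc : 0 < gc by rewrite -(nmulr_rlt0 _ hga).
  have -> : ga / (ga - gc) = (- ga) / (gc - ga).
    by rewrite -[gc - ga]opprB invrN mulrN mulNr opprK.
  have hp : 0 < gc - ga by lra.
  apply/andP; split; first by apply: divr_ge0; lra.
  by rewrite ler_pdivrMr // mul1r; lra.
- by rewrite hga mul0r ltxx in h.
Qed.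

Lemma seg_end1 (R : realFieldType) (a c : point R) : on_seg a c a.
Proof. exists 0; split; first by rewrite lexx ler01. by split; ring. Qed.
Lemma seg_end2 (R : realFieldType) (a c : point R) : on_seg a c c.
Proof. exists 1; split; first by rewrite lexx ler01. by split; ring. Qed.
Lemma on_seg_sym (R : realFieldType) (a c p : point R) : on_seg a c p -> on_seg c a p.
Proof.
move=> [t [/andP [t0 t1] [hx hy]]]; exists (1 - t); split.
  by apply/andP; split; lra.
by rewrite hx hy; split; ring.
Qed.

Lemma pos_comb (R : realFieldType) (ga gc t : R) :
  0 <= t <= 1 -> 0 < ga -> 0 < gc -> 0 < (1 - t) * ga + t * gc.
Proof. move=> /andP [t0 t1] ha hc; nra. Qed.

Lemma side (R : realFieldType) (h1 h2 : R) (r : segment R) b t :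
  h1 != h2 -> instrip h1 h2 r.1 -> instrip h1 h2 r.2 ->
  ~ seg_meet r ((b, h1), (t, h2)) ->
  (forall p, on_seg r.1 r.2 p -> 0 < gsep h1 h2 b t p) \/
  (forall p, on_seg r.1 r.2 p -> gsep h1 h2 b t p < 0).
Proof.
move=> h12 s1 s2 nm.
have nz : forall e, on_seg r.1 r.2 e -> gsep h1 h2 b t e != 0.
  move=> e he; apply/negP => /eqP ge; apply: nm; exists e; split => //.
  by apply: on_sep => //; apply: (on_seg_tau h12 s1 s2).
have n1 := nz _ (seg_end1 r.1 r.2); have n2 := nz _ (seg_end2 r.1 r.2).
set ga := gsep h1 h2 b t r.1 in n1 *; set gc := gsep h1 h2 b t r.2 in n2 *.
have comb : forall p, on_seg r.1 r.2 p -> exists t0, 0 <= t0 <= 1 /\ gsep h1 h2 b t p = (1 - t0) * ga + t0 * gc.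
  move=> p [t0 [ht [hx hy]]]; exists t0; split => //.
  exact: gsep_comb.
case: (ltrgt0P (ga * gc)) => hs.
- case: (ltrgt0P ga) => ha.
  + have hc : 0 < gc by rewrite -(pmulr_rgt0 _ ha).
    left => p /comb [t0 [ht ->]]; exact: pos_comb.
  + have hc : gc < 0 by rewrite -(nmulr_rgt0 _ ha).
    right => p /comb [t0 [ht ->]].
    have := pos_comb ht (_ : 0 < - ga) (_ : 0 < - gc).
    rewrite !oppr_gt0 => /(_ ha hc); lra.
  + by move: n1; rewrite ha eqxx.
- case: (crossing hs) => t0 [ht e0]; exfalso; apply: nm.
  pose P : point R := ((1 - t0) * r.1.1 + t0 * r.2.1, (1 - t0) * r.1.2 + t0 * r.2.2).
  have hP : on_seg r.1 r.2 P by exists t0.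
  exists P; split => //; apply: on_sep => //; first exact: (on_seg_tau h12 s1 s2).
  by rewrite (gsep_comb b t h12 (erefl P.1) (erefl P.2)).
- by move: hs => /eqP; rewrite mulf_eq0 (negbTE n1) (negbTE n2).
Qed.

Lemma instrip_fam (R : realFieldType) (h1 h2 : R) n (s : 'I_n -> segment R) i :
  IPSEG_rep_cycle h1 h2 s -> instrip h1 h2 (s i).1 /\ instrip h1 h2 (s i).2.
Proof.
move=> [H _]; rewrite /instrip; case: (H i) => [[[-> ->]|[-> ->]]|[[-> ->]|[-> ->]]];
by split; auto.
Qed.

Definition idx n (u : 'I_n) k := iter k (@ordS n) u.

Lemma idx_val n (u : 'I_n) k : val (idx u k) = ((u + k) %% n)%N.
Proof.
elim: k => [|k IH]; first by rewrite /= addn0 modn_small.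
rewrite /idx iterS /= -/(idx u k) IH.
by rewrite addnS -[((u + k) %% n).+1]addn1 modnDml addn1.
Qed.

Lemma modD_inj x c1 c2 n : ((x + c1) %% n = (x + c2) %% n -> c1 < n -> c2 < n -> c1 = c2)%N.
Proof.
move=> /eqP; rewrite eqn_modDl => /eqP e h1 h2.
by rewrite !modn_small in e.
Qed.

Lemma idx_eq n (u : 'I_n) a c : ((u + a) %% n = (u + c) %% n)%N -> idx u a = idx u c.
Proof. by move=> e; apply: val_inj; rewrite !idx_val. Qed.

Lemma modD_inj' y1 y2 x c1 c2 n : (y1 %% n = y2 %% n -> y1 = x + c1 -> y2 = x + c2 ->
   c1 < n -> c2 < n -> c1 = c2)%N.
Proof. move=> e E1 E2; subst y1 y2; exact: (modD_inj e). Qed.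

Lemma ordS_val n (i : 'I_n) x : val i = (x %% n)%N -> val (ordS i) = ((x + 1) %% n)%N.
Proof. by move=> /= ->; rewrite -addn1 modnDml. Qed.

Lemma far n (u : 'I_n) a e : (2 <= e)%N -> (e + 2 <= n)%N ->
  idx u a <> idx u (a + e) /\ ~ cycle_adj (idx u a) (idx u (a + e)).
Proof.
move=> he hn; split.
  move=> /(congr1 val); rewrite !idx_val => /modD_inj' H.
  by have := H (u + a)%N 0%N e ltac:(lia) ltac:(lia) ltac:(lia) ltac:(lia); lia.
case=> /(congr1 val).
  rewrite (ordS_val (idx_val u a)) idx_val => /modD_inj' H.
  by have := H (u + a)%N e 1%N ltac:(lia) ltac:(lia) ltac:(lia) ltac:(lia); lia.
rewrite (ordS_val (idx_val u (a + e))) idx_val => /modD_inj' H.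
by have := H (u + a)%N 0%N (e + 1)%N ltac:(lia) ltac:(lia) ltac:(lia) ltac:(lia); lia.
Qed.

Lemma adj_meet (R : realFieldType) (h1 h2 : R) n (s : 'I_n -> segment R) u k :
  (2 <= n)%N -> IPSEG_rep_cycle h1 h2 s -> seg_meet (s (idx u k)) (s (idx u k.+1)).
Proof.
move=> hn [_ H]; apply/H; last by left.
move=> /(congr1 val); rewrite !idx_val => /modD_inj' H'.
by have := H' (u + k)%N 0%N 1%N ltac:(lia) ltac:(lia) ltac:(lia) ltac:(lia).
Qed.

Definition sideP (R : realFieldType) (h1 h2 b t : R) (r : segment R) (sg : bool) :=
  forall p, on_seg r.1 r.2 p ->
    if sg then 0 < gsep h1 h2 b t p else gsep h1 h2 b t p < 0.

Lemma side' (R : realFieldType) (h1 h2 : R) n (s : 'I_n -> segment R) i b t :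
  h1 != h2 -> IPSEG_rep_cycle h1 h2 s -> ~ seg_meet (s i) ((b, h1), (t, h2)) ->
  exists sg, sideP h1 h2 b t (s i) sg.
Proof.
move=> h12 H nm; have [s1 s2] := instrip_fam i H.
by case: (side h12 s1 s2 nm) => hs; [exists true | exists false].
Qed.

Lemma chain (R : realFieldType) (h1 h2 : R) n (s : 'I_n -> segment R) u b t a m :
  h1 != h2 -> (2 <= n)%N -> IPSEG_rep_cycle h1 h2 s ->
  (forall j, (a <= j <= a + m)%N -> ~ seg_meet (s (idx u j)) ((b, h1), (t, h2))) ->
  exists sg, forall j, (a <= j <= a + m)%N -> sideP h1 h2 b t (s (idx u j)) sg.
Proof.
move=> h12 hn H; elim: m => [|m IH] hm.
  have [sg hs] := side' h12 H (hm a ltac:(lia)).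
  by exists sg => j hj; have -> : j = a by lia.
have [sg hs] := IH (fun j hj => hm j ltac:(lia)).
have [sg' hs'] := side' h12 H (hm (a + m.+1)%N ltac:(lia)).
have [P [P1 P2]] := adj_meet u (a + m) hn H.
have e : sg = sg'.
  have := hs (a + m)%N ltac:(lia) P P1.
  have := hs' P; rewrite addnS => /(_ P2).
  by case: (sg); case: (sg') => // h h'; exfalso; lra.
subst sg'; exists sg => j hj.
case: (ltnP (a + m) j) => hj2; last by apply: hs; lia.
by have -> : j = (a + m.+1)%N by lia.
Qed.

Lemma chain_prod (R : realFieldType) (h1 h2 : R) n (s : 'I_n -> segment R) u b t a m j1 j2 x y :
  h1 != h2 -> (2 <= n)%N -> IPSEG_rep_cycle h1 h2 s ->
  (forall j, (a <= j <= a + m)%N -> ~ seg_meet (s (idx u j)) ((b, h1), (t, h2))) ->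
  (a <= j1 <= a + m)%N -> (a <= j2 <= a + m)%N ->
  on_seg (s (idx u j1)).1 (s (idx u j1)).2 x -> on_seg (s (idx u j2)).1 (s (idx u j2)).2 y ->
  0 < gsep h1 h2 b t x * gsep h1 h2 b t y.
Proof.
move=> h12 hn H hm hj1 hj2 hx hy.
have [sg hs] := chain h12 hn H hm.
have := hs j1 hj1 x hx; have := hs j2 hj2 y hy.
case: (sg) => h h'; first by apply: mulr_gt0.
by rewrite -mulrNN; apply: mulr_gt0; rewrite oppr_gt0.
Qed.

Lemma exists_min (P : pred nat) : (exists n, P n) -> exists m, P m /\ forall k, P k -> (m <= k)%N.
Proof. move=> ex; case: (ex_minnP ex) => m Pm hm; by exists m. Qed.
Lemma exists_max (P : pred nat) b : (exists n, P n) -> (forall n, P n -> n <= b)%N ->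
  exists m, P m /\ forall k, P k -> (k <= m)%N.
Proof. move=> ex ub; case: (ex_maxnP ex ub) => m Pm hm; by exists m. Qed.

Lemma perm_norm (R : realFieldType) (h1 h2 : R) (q : segment R) :
  is_permutation_seg h1 h2 q -> exists b t, forall p, on_seg q.1 q.2 p <-> on_seg (b, h1) (t, h2) p.
Proof.
case: q => [[x1 y1] [x2 y2]]; rewrite /is_permutation_seg /= => -[[-> ->]|[-> ->]].
  by exists x1, x2.
by exists x2, x1 => p; split => /on_seg_sym.
Qed.

Lemma interval_y (R : realFieldType) (h : R) (r : segment R) p :
  interval_on h r -> on_seg r.1 r.2 p -> p.2 = h.
Proof. by move=> [e1 e2] [t [_ [_ ->]]]; rewrite e1 e2; ring. Qed.

Lemma meet_bottom (R : realFieldType) (h1 h2 : R) (r : segment R) b t p :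
  h1 != h2 -> interval_on h1 r -> on_seg r.1 r.2 p -> on_seg (b, h1) (t, h2) p -> p = (b, h1).
Proof.
move=> h12 hr hp [tt [_ [/= hx hy]]].
have py := interval_y hr hp.
have ht : tt = 0.
  have hd : h2 - h1 != 0 by rewrite subr_eq0 eq_sym.
  have : tt * (h2 - h1) = 0 by rewrite py in hy; lra.
  by move/eqP; rewrite mulf_eq0 (negbTE hd) orbF => /eqP.
case: p hx hy py {hp} => x y /= -> _ ->; rewrite ht; congr (_, _); ring.
Qed.

Lemma gsep_h1 (R : realFieldType) (h1 h2 b t x : R) : gsep h1 h2 b t (x, h1) = x - b.
Proof. by rewrite /gsep /tau /= subrr mul0r mulr0 subr0. Qed.

Lemma no_meet_lines (R : realFieldType) (h1 h2 : R) (r r' : segment R) :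
  h1 != h2 -> interval_on h1 r -> interval_on h2 r' -> ~ seg_meet r r'.
Proof.
move=> h12 hr hr' [p [p1 p2]].
have := interval_y hr p1; have := interval_y hr' p2 => -> e.
by rewrite e eqxx in h12.
Qed.

Lemma meet_sep_iff (R : realFieldType) (r q : segment R) (c d : point R) :
  (forall p, on_seg q.1 q.2 p <-> on_seg c d p) -> (seg_meet r q <-> seg_meet r (c, d)).
Proof.
move=> E; split => [[p [h1 h2]]|[p [h1 h2]]]; exists p; split => //; by apply/E.
Qed.

Lemma vert_nomeet (R : realFieldType) (h1 h2 : R) (r : segment R) X :
  h1 != h2 -> interval_on h1 r -> ~ on_seg r.1 r.2 (X, h1) -> ~ seg_meet r ((X, h1), (X, h2)).
Proof.
move=> h12 hr nX [p [p1 p2]]; apply: nX.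
by rewrite -(meet_bottom h12 hr p1 p2).
Qed.

Lemma arith (R : realFieldType) (a c a' c' : R) :
  0 < (a - c) * (a' - c) -> 0 < (c' - a) * (c - a) ->
  exists X, (a - X) * (c - X) <= 0 /\ (a' - X) * (c' - X) <= 0.
Proof.
move=> H1 H2.
case: (ltrgt0P (a - c)) => hac.
- have h1 : 0 < a' - c by rewrite -(pmulr_rgt0 _ hac).
  have h2 : c' - a < 0 by rewrite -(nmulr_rgt0 _ (_ : c - a < 0)) //; lra.
  case: (lerP a' a) => ha.
    exists a'; rewrite subrr mul0r lexx; split => //.
    by apply: mulr_ge0_le0; lra.
  exists a; rewrite subrr mul0r lexx; split => //.
  have hp : 0 < a' - a by lra.
  by apply: ltW; rewrite pmulr_rlt0.
- have h1 : a' - c < 0 by rewrite -(nmulr_rgt0 _ hac).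
  have h2 : 0 < c' - a by rewrite -(pmulr_rgt0 _ (_ : 0 < c - a)) //; lra.
  case: (lerP a a') => ha.
    exists a'; rewrite subrr mul0r lexx; split => //.
    by apply: mulr_le0_ge0; lra.
  exists a; rewrite subrr mul0r lexx; split => //.
  have hp : a' - a < 0 by lra.
  by apply: ltW; rewrite nmulr_rlt0.
- by move: H1; rewrite hac mul0r ltxx.
Qed.

Lemma seg_meet_sym (R : realFieldType) (r r' : segment R) : seg_meet r r' -> seg_meet r' r.
Proof. by move=> [p [h1 h2]]; exists p. Qed.

Lemma nomeet' (R : realFieldType) (h1 h2 : R) n (s : 'I_n -> segment R) (u : 'I_n) a c :
  IPSEG_rep_cycle h1 h2 s -> (a + 2 <= c)%N -> (c + 2 <= a + n)%N ->
  ~ seg_meet (s (idx u a)) (s (idx u c)).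
Proof.
move=> [_ H] h1c h2c.
have -> : c = (a + (c - a))%N by lia.
have [ne na] := far u a (ltac:(lia) : (2 <= c - a)%N) (ltac:(lia) : (c - a + 2 <= n)%N).
by move/(H _ _ ne).
Qed.

Lemma idx_n n (u : 'I_n) j : idx u (j + n) = idx u j.
Proof. by apply: idx_eq; rewrite addnA modnDr. Qed.

Lemma perm_of (R : realFieldType) (h1 h2 : R) n (s : 'I_n -> segment R) i j :
  h1 != h2 -> IPSEG_rep_cycle h1 h2 s -> interval_on h1 (s i) -> ~ interval_on h1 (s j) ->
  seg_meet (s i) (s j) -> is_permutation_seg h1 h2 (s j).
Proof.
move=> h12 [H _] hi hj hm; case: (H j) => // [[]] // hj2.
by case: (no_meet_lines h12 hi hj2 hm).
Qed.

Lemma bottom_on (R : realFieldType) (h1 h2 : R) (r q : segment R) b t :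
  h1 != h2 -> interval_on h1 r ->
  (forall p, on_seg q.1 q.2 p <-> on_seg (b, h1) (t, h2) p) ->
  seg_meet r q -> on_seg r.1 r.2 (b, h1).
Proof.
move=> h12 hr E [P [P1 P2]].
by rewrite -(meet_bottom h12 hr P1 (iffLR (E P) P2)).
Qed.

Lemma key (R : realFieldType) (h1 h2 : R) n (s : 'I_n -> segment R) (u : 'I_n) d :
  h1 != h2 -> (4 <= n)%N -> IPSEG_rep_cycle h1 h2 s -> (d < n)%N ->
  interval_on h1 (s u) -> interval_on h1 (s (idx u d)) ->
  (forall j, (j <= d)%N -> interval_on h1 (s (idx u j))) \/
  (forall j, (d <= j <= n)%N -> interval_on h1 (s (idx u j))).
Proof.
move=> h12 hn H hd Uu Ud.
have hn2 : (2 <= n)%N by lia.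
pose U j := interval_on h1 (s (idx u j)).
pose Ub j := ((s (idx u j)).1.2 == h1) && ((s (idx u j)).2.2 == h1).
have UbP : forall j, Ub j <-> U j.
  move=> j; rewrite /Ub /U /interval_on; split.
    by move=> /andP [/eqP -> /eqP ->].
  by move=> [-> ->]; rewrite !eqxx.
have nUb : forall j, ~~ Ub j -> ~ U j by move=> j /negP nj /UbP.
have Ubn : forall j, ~ U j -> ~~ Ub j by move=> j nj; apply/negP => /UbP.
have U0 : U 0%N by [].
have Un : U n by have e := idx_n u 0; rewrite add0n in e; rewrite /U e.
case: (classic (forall j, (j <= d)%N -> U j)) => [|/not_all_ex_not [j1]]; first by move=> hh; left.
move=> nimp; have [hj1 nj1] := imply_to_and _ _ nimp.
case: (classic (forall j, (d <= j <= n)%N -> U j)) => [|/not_all_ex_not [j2]]; first by move=> hh; right.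
move=> nimp2; have [hj2 nj2] := imply_to_and _ _ nimp2.
exfalso.
have j1d : j1 != d by apply/eqP => e; apply: nj1; rewrite e.
have j10 : j1 != 0%N by apply/eqP => e; apply: nj1; rewrite e.
have j2d : j2 != d by apply/eqP => e; apply: nj2; rewrite e.
have j2n : j2 != n by apply/eqP => e; apply: nj2; rewrite e.
have [p [Hp minp]] := exists_min (ex_intro (fun j => ~~ Ub j) j1 (Ubn _ nj1)).
have hp1 := minp _ (Ubn _ nj1).
have p0 : p != 0%N by apply/eqP => e; move: Hp; rewrite e => /nUb.
have pd : p != d by apply/eqP => e; move: Hp; rewrite e => /nUb.
have Ulow : forall j, (j < p)%N -> U j.
  move=> j hj; apply/UbP; apply/negPn/negP => nj; have := minp j nj; lia.
have [p' [/andP [hp'd Hp'] maxp']] := exists_max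
  (ex_intro (fun j => (j <= d)%N && ~~ Ub j) j1 (introT andP (conj hj1 (Ubn _ nj1))))
  (fun j => @proj1 _ _ \o (@andP _ _) : _ -> (j <= d)%N).
have pp' : (p <= p')%N by apply: maxp'; rewrite Hp andbT; lia.
have p'd : p' != d by apply/eqP => e; move: Hp'; rewrite e => /nUb.
have Umid1 : forall j, (p' < j <= d)%N -> U j.
  move=> j hj; apply/UbP; apply/negPn/negP => nj.
  have := maxp' j; rewrite nj andbT => /(_ ltac:(lia)); lia.
have [q' [/andP [hdq' Hq'] minq']] := exists_min
  (ex_intro (fun j => (d <= j)%N && ~~ Ub j) j2 (introT andP (conj (proj1 (andP hj2)) (Ubn _ nj2)))).
have q'j2 : (q' <= j2)%N by apply: minq'; rewrite (Ubn _ nj2) andbT; lia.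
have q'd : q' != d by apply/eqP => e; move: Hq'; rewrite e => /nUb.
have q'n : q' != n by apply/eqP => e; move: Hq'; rewrite e => /nUb.
have Umid2 : forall j, (d <= j < q')%N -> U j.
  move=> j hj; apply/UbP; apply/negPn/negP => nj.
  have := minq' j; rewrite nj andbT => /(_ ltac:(lia)); lia.
have [q [/andP [hqn Hq] maxq]] := exists_max
  (ex_intro (fun j => (j <= n)%N && ~~ Ub j) j2 (introT andP (conj (proj2 (andP hj2)) (Ubn _ nj2))))
  (fun j => @proj1 _ _ \o (@andP _ _) : _ -> (j <= n)%N).
have q'q : (q' <= q)%N by apply: maxq; rewrite Hq' andbT; lia.
have qn : q != n by apply/eqP => e; move: Hq; rewrite e => /nUb.
have Uhigh : forall j, (q < j <= n)%N -> U j.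
  move=> j hj; apply/UbP; apply/negPn/negP => nj.
  have := maxq j; rewrite nj andbT => /(_ ltac:(lia)); lia.
have {p0} p0 : (0 < p)%N by rewrite lt0n.
have {pd} pd : (p < d)%N by rewrite ltn_neqAle pd /=; lia.
have {p'd} p'd : (p' < d)%N by rewrite ltn_neqAle p'd.
have {q'd} q'd : (d < q')%N by rewrite ltn_neqAle eq_sym q'd.
have {q'n} q'n : (q' < n)%N by rewrite ltn_neqAle q'n /=; lia.
have {qn} qn : (q < n)%N by rewrite ltn_neqAle qn.
have UA : forall j, (q < j < n + p)%N -> U j.
  move=> j hj; case: (leqP j n) => hjn; first by apply: Uhigh; lia.
  have -> : j = ((j - n) + n)%N by lia.
  by rewrite /U idx_n; apply: Ulow; lia.
have UB : forall j, (p' < j < q')%N -> U j.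
  move=> j hj; case: (leqP j d) => hjd; first by apply: Umid1; lia.
  by apply: Umid2; lia.
have mp : seg_meet (s (idx u p.-1)) (s (idx u p)).
  by have := adj_meet u p.-1 hn2 H; rewrite prednK // lt0n.
have mp' : seg_meet (s (idx u p'.+1)) (s (idx u p')).
  exact: seg_meet_sym (adj_meet u p' hn2 H).
have mq' : seg_meet (s (idx u q'.-1)) (s (idx u q')).
  by have := adj_meet u q'.-1 hn2 H; rewrite prednK //; lia.
have mq : seg_meet (s (idx u q.+1)) (s (idx u q)).
  exact: seg_meet_sym (adj_meet u q hn2 H).
have Upm : U p.-1 by apply: Ulow; lia.
have Up'p : U p'.+1 by apply: UB; lia.
have Uq'm : U q'.-1 by apply: UB; lia.
have Uqp : U q.+1 by apply: Uhigh; lia.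
have [bp [tp Ep]] := perm_norm (perm_of h12 H Upm (nUb _ Hp) mp).
have [bp' [tp' Ep']] := perm_norm (perm_of h12 H Up'p (nUb _ Hp') mp').
have [bq' [tq' Eq']] := perm_norm (perm_of h12 H Uq'm (nUb _ Hq') mq').
have [bq [tq Eq]] := perm_norm (perm_of h12 H Uqp (nUb _ Hq) mq).
have Bp1 := bottom_on h12 Upm Ep mp.
have Bp'1 := bottom_on h12 Up'p Ep' mp'.
have Bq'1 := bottom_on h12 Uq'm Eq' mq'.
have Bq1 := bottom_on h12 Uqp Eq mq.
have Bp2 := iffRL (Ep _) (seg_end1 (bp, h1) (tp, h2)).
have Bp'2 := iffRL (Ep' _) (seg_end1 (bp', h1) (tp', h2)).
have Bq'2 := iffRL (Eq' _) (seg_end1 (bq', h1) (tq', h2)).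
have Bq2 := iffRL (Eq _) (seg_end1 (bq, h1) (tq, h2)).
have S1 : 0 < (bp - bq) * (bp' - bq).
  have := @chain_prod _ h1 h2 n s u bq tq p (p' - p) p p' (bp, h1) (bp', h1) h12 hn2 H.
  rewrite !gsep_h1; apply => //; try lia.
  move=> j hj hm; apply: (@nomeet' _ h1 h2 n s u j q H _ _ (iffRL (meet_sep_iff _ Eq) hm)); lia.
have S2 : 0 < (bq' - bp) * (bq - bp).
  have := @chain_prod _ h1 h2 n s u bp tp q' (q - q') q' q (bq', h1) (bq, h1) h12 hn2 H.
  rewrite !gsep_h1; apply => //; try lia.
  move=> j hj hm; apply: (@nomeet' _ h1 h2 n s u p j H _ _ (seg_meet_sym (iffRL (meet_sep_iff _ Ep) hm))); lia.
have [X [X1 X2]] := arith S1 S2.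
have [ja [hja Ja]] : exists ja, (q < ja < n + p)%N /\ on_seg (s (idx u ja)).1 (s (idx u ja)).2 (X, h1).
  apply: NNPP => nA.
  have := @chain_prod _ h1 h2 n s u X X q.+1 (n + p - 2 - q) q.+1 (n + p).-1 (bq, h1) (bp, h1) h12 hn2 H.
  rewrite !gsep_h1 => Hc.
  have : 0 < (bq - X) * (bp - X).
    apply: Hc => //; try lia.
      move=> j hj; apply: vert_nomeet => //; first by apply: UA; lia.
      by move=> hX; apply: nA; exists j; split => //; lia.
    have -> : (n + p).-1 = (p.-1 + n)%N by lia.
    by rewrite idx_n.
  by rewrite mulrC; lra.
have [jb [hjb Jb]] : exists jb, (p' < jb < q')%N /\ on_seg (s (idx u jb)).1 (s (idx u jb)).2 (X, h1).
  apply: NNPP => nB.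
  have := @chain_prod _ h1 h2 n s u X X p'.+1 (q' - p' - 2) p'.+1 q'.-1 (bp', h1) (bq', h1) h12 hn2 H.
  rewrite !gsep_h1 => Hc.
  have : 0 < (bp' - X) * (bq' - X).
    apply: Hc => //; try lia.
    move=> j hj; apply: vert_nomeet => //; first by apply: UB; lia.
    by move=> hX; apply: nB; exists j; split => //; lia.
  lra.
apply: (@nomeet' _ h1 h2 n s u jb ja H); try lia.
by exists (X, h1).
Qed.

Lemma gsep_y (R : realFieldType) (h1 h2 b t : R) (p : point R) : p.2 = h1 -> gsep h1 h2 b t p = p.1 - b.
Proof. by case: p => x y /= ->; apply: gsep_h1. Qed.

Lemma le_seg_max (R : realFieldType) (a c p : point R) :
  on_seg a c p -> p.1 <= Order.max a.1 c.1.
Proof.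
move=> [t [/andP [t0 t1] [-> _]]].
have ha : a.1 <= Order.max a.1 c.1 by rewrite le_max lexx.
have hc : c.1 <= Order.max a.1 c.1 by rewrite le_max lexx orbT.
have e1 : 0 <= (1 - t) * (Order.max a.1 c.1 - a.1) by apply: mulr_ge0; lra.
have e2 : 0 <= t * (Order.max a.1 c.1 - c.1) by apply: mulr_ge0; lra.
lra.
Qed.

Lemma idx0 n (u : 'I_n) : idx u 0 = u.
Proof. by []. Qed.

Lemma idxn n (u : 'I_n) : idx u n = u.
Proof. by have e := idx_n u 0; rewrite add0n in e. Qed.

Lemma contains_max (R : realFieldType) (h1 h2 : R) n (s : 'I_n -> segment R) i j :
  h1 != h2 -> IPSEG_rep_cycle h1 h2 s -> interval_on h1 (s i) -> interval_on h1 (s j) ->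
  (forall k, Order.max (s i).1.1 (s i).2.1 <= Order.max (s k).1.1 (s k).2.1) ->
  seg_meet (s i) (s j) -> on_seg (s j).1 (s j).2 (Order.max (s i).1.1 (s i).2.1, h1).
Proof.
move=> h12 H hi hj hmin [P [P1 P2]].
set M := Order.max (s i).1.1 (s i).2.1 in hmin *.
apply: NNPP => nX.
have [sg hs] := side' h12 H (vert_nomeet h12 hj nX).
have hP := hs P P2.
rewrite (gsep_y _ _ _ (interval_y hj P2)) in hP.
have PM : P.1 <= M by apply: le_seg_max.
have hM := hmin j.
have [E [hE1 hE2 hEy]] : exists E, [/\ on_seg (s j).1 (s j).2 E,
    E.1 = Order.max (s j).1.1 (s j).2.1 & E.2 = h1].
  case: (leP (s j).1.1 (s j).2.1) => hle.
    exists (s j).2; split; [exact: seg_end2 | by [] | exact: proj2 hj].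
  exists (s j).1; split; [exact: seg_end1 | by [] | exact: proj1 hj].
have := hs E hE1; rewrite (gsep_y _ _ _ hEy) hE2.
by case: (sg) hP => hP hE; lra.
Qed.

Lemma all_L1_false (R : realFieldType) (h1 h2 : R) n (s : 'I_n -> segment R) (u : 'I_n) :
  h1 != h2 -> (4 <= n)%N -> IPSEG_rep_cycle h1 h2 s ->
  (forall i, interval_on h1 (s i)) -> False.
Proof.
move=> h12 hn H hall.
have hn2 : (2 <= n)%N by lia.
pose r i := Order.max (s i).1.1 (s i).2.1.
case: (@arg_minP _ _ _ u xpredT r isT) => i _ hmin.
have hm : forall k, r i <= r k by move=> k; apply: hmin.
have m1 : seg_meet (s i) (s (idx i 1)) by have := adj_meet i 0 hn2 H.
have m2 : seg_meet (s i) (s (idx i n.-1)).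
  have := adj_meet i n.-1 hn2 H; rewrite prednK; last by lia.
  by rewrite idxn => /seg_meet_sym.
have c1 := contains_max h12 H (hall i) (hall _) hm m1.
have c2 := contains_max h12 H (hall i) (hall _) hm m2.
apply: (@nomeet' _ h1 h2 n s i 1 n.-1 H); try lia.
by exists (r i, h1).
Qed.

Lemma idx_add n (u : 'I_n) a b : idx (idx u a) b = idx u (a + b).
Proof. by apply: val_inj; rewrite !idx_val modnDml addnA. Qed.

Lemma idxS n (u : 'I_n) j : idx u j.+1 = ordS (idx u j).
Proof. by rewrite /idx iterS. Qed.

Lemma ord_pred_idxS n (u : 'I_n) j : ord_pred (idx u j.+1) = idx u j.
Proof. by rewrite idxS ordSK. Qed.

Lemma every_idx n (u v : 'I_n) : exists d, (d < n)%N /\ idx u d = v.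
Proof.
exists ((v + (n - u)) %% n)%N; split; first by rewrite ltn_mod; case: n u v => [[]|].
apply: val_inj; rewrite idx_val modnDmr.
have -> : (u + (v + (n - u)) = v + n)%N by have := ltn_ord u; lia.
by rewrite modnDr modn_small.
Qed.

Lemma IPSEG_sym (R : realFieldType) (h1 h2 : R) n (s : 'I_n -> segment R) :
  IPSEG_rep_cycle h1 h2 s -> IPSEG_rep_cycle h2 h1 s.
Proof.
move=> [H1 H2]; split => // i; case: (H1 i) => [[]|[]]; rewrite /is_interval_seg /is_permutation_seg; tauto.
Qed.

Lemma isint_sym (R : realFieldType) (h1 h2 : R) (r : segment R) :
  is_interval_seg h1 h2 r <-> is_interval_seg h2 h1 r.
Proof. rewrite /is_interval_seg; tauto. Qed.

Lemma line_prop (R : realFieldType) (h1 h2 : R) (r r' : segment R) :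
  h1 != h2 -> interval_on h1 r -> seg_meet r r' -> is_interval_seg h1 h2 r' -> interval_on h1 r'.
Proof. by move=> h12 hr hm [] // hr'; case: (no_meet_lines h12 hr hr' hm). Qed.

Lemma run_line (R : realFieldType) (h1 h2 : R) n (s : 'I_n -> segment R) (u : 'I_n) k :
  h1 != h2 -> (2 <= n)%N -> IPSEG_rep_cycle h1 h2 s -> interval_on h1 (s u) ->
  (forall j, (j <= k)%N -> is_interval_seg h1 h2 (s (idx u j))) ->
  forall j, (j <= k)%N -> interval_on h1 (s (idx u j)).
Proof.
move=> h12 hn H hu hI; elim=> [|j IH] hj //.
exact: (line_prop h12 (IH ltac:(lia)) (adj_meet u j hn H) (hI _ hj)).
Qed.

Lemma all_interval_false (R : realFieldType) (h1 h2 : R) n (s : 'I_n -> segment R) (u : 'I_n) :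
  h1 != h2 -> (4 <= n)%N -> IPSEG_rep_cycle h1 h2 s ->
  (forall i, is_interval_seg h1 h2 (s i)) -> False.
Proof.
move=> h12 hn H hall.
have hn2 : (2 <= n)%N by lia.
case: (hall u) => hu.
  apply: (all_L1_false u h12 hn H) => v.
  have [d [hd <-]] := every_idx u v.
  by apply: (run_line (k := d) h12 hn2 H hu) => // j _; apply: hall.
have h21 : h2 != h1 by rewrite eq_sym.
have H' := IPSEG_sym H.
apply: (all_L1_false u h21 hn H') => v.
have [d [hd <-]] := every_idx u v.
by apply: (run_line (k := d) h21 hn2 H' hu) => // j _; apply/isint_sym; apply: hall.
Qed.

Lemma arc_data (R : realFieldType) (h1 h2 : R) n (s : 'I_n -> segment R) A :
  interval_arc h1 h2 s A ->
  exists i k, [/\ (k < n)%N, A = [set idx i j | j : 'I_k.+1],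
    (forall j, (j <= k)%N -> is_interval_seg h1 h2 (s (idx i j))),
    ~ is_interval_seg h1 h2 (s (ord_pred i)) & ~ is_interval_seg h1 h2 (s (idx i k.+1))].
Proof.
move=> [i [k [hk [eA [hall [n1 n2]]]]]]; exists i, k; split => //.
move=> j hj; apply: hall; rewrite eA; apply/imsetP; by exists (Ordinal (hj : (j < k.+1)%N)).
Qed.

Lemma mem_arc n (i : 'I_n) k x : x \in [set idx i j | j : 'I_k.+1] -> exists j, (j <= k)%N /\ x = idx i j.
Proof. by case/imsetP => j _ ->; exists j; split => //; exact: (ltn_ord j). Qed.

Lemma in_arc n (i : 'I_n) k j : (j <= k)%N -> idx i j \in [set idx i j | j : 'I_k.+1].
Proof. by move=> hj; apply/imsetP; exists (Ordinal (hj : (j < k.+1)%N)). Qed.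

Lemma arc_eq n (I : 'I_n -> Prop) (i : 'I_n) k i' k' d :
  (forall j, (j <= k)%N -> I (idx i j)) -> ~ I (idx i k.+1) ->
  (forall j, (j <= k')%N -> I (idx i' j)) -> ~ I (ord_pred i') -> ~ I (idx i' k'.+1) ->
  idx i d = i' -> (forall j, (j <= d)%N -> I (idx i j)) -> i' = i /\ k' = k.
Proof.
move=> hA nA hC nCp nC ed hp.
have dk : (d <= k)%N.
  case: (leqP d k) => // lt; case: nA; apply: hp; lia.
have d0 : d = 0%N.
  case: d ed hp dk => // d' ed hp _; case: nCp.
  by rewrite -ed ord_pred_idxS; apply: hp; lia.
subst d; rewrite idx0 in ed; subst i'; split => //.
case: (ltngtP k k') => // h.
- by case: nA; apply: hC; lia.
- by case: nC; apply: hA; lia.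
Qed.

Lemma arc_uniq (R : realFieldType) (h1 h2 : R) n (s : 'I_n -> segment R) A C :
  h1 != h2 -> (4 <= n)%N -> IPSEG_rep_cycle h1 h2 s ->
  interval_arc h1 h2 s A -> interval_arc h1 h2 s C ->
  (forall x, x \in A -> interval_on h1 (s x)) -> (forall x, x \in C -> interval_on h1 (s x)) ->
  A = C.
Proof.
move=> h12 hn H /arc_data [i [k [hk eA hA nAp nA]]] /arc_data [i' [k' [hk' eC hC nCp nC]]] LA LC.
have Li : interval_on h1 (s i) by apply: LA; rewrite eA; apply: (in_arc i (leq0n k)).
have Li' : interval_on h1 (s i') by apply: LC; rewrite eC; apply: (in_arc i' (leq0n k')).
have [d [hd ed]] := every_idx i i'.
case: (key h12 hn H hd Li (_ : interval_on h1 (s (idx i d)))); first by rewrite ed.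
- move=> hp.
  have [e1 e2] := @arc_eq n (fun x => is_interval_seg h1 h2 (s x)) _ _ _ _ _ hA nA hC nCp nC ed (fun j hj => or_introl (hp j hj)).
  by rewrite eA eC e1 e2.
- move=> hp.
  have ed' : idx i' (n - d) = i by rewrite -ed idx_add subnKC ?idxn //; lia.
  have hp' : forall j, (j <= n - d)%N -> is_interval_seg h1 h2 (s (idx i' j)).
    by move=> j hj; left; rewrite -ed idx_add; apply: hp; lia.
  have [e1 e2] := @arc_eq n (fun x => is_interval_seg h1 h2 (s x)) _ _ _ _ _ hC nC hA nAp nA ed' hp'.
  by rewrite eA eC e1 e2.
Qed.

Lemma arc_exists (R : realFieldType) (h1 h2 : R) n (s : 'I_n -> segment R) (i0 m0 : 'I_n) :
  is_interval_seg h1 h2 (s i0) -> ~ is_interval_seg h1 h2 (s m0) ->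
  exists A, interval_arc h1 h2 s A.
Proof.
move=> hi0 hm0.
pose Ib x := (((s x).1.2 == h1) && ((s x).2.2 == h1)) || (((s x).1.2 == h2) && ((s x).2.2 == h2)).
have IbP : forall x, Ib x <-> is_interval_seg h1 h2 (s x).
  move=> x; rewrite /Ib /is_interval_seg /interval_on; split.
    by case/orP => /andP [/eqP -> /eqP ->]; [left|right].
  by case=> [[-> ->]|[-> ->]]; rewrite !eqxx ?orbT.
have [d0 [hd0 ed0]] := every_idx m0 i0.
have Id0 : Ib (idx m0 d0) by apply/IbP; rewrite ed0.
have [d1 [Hd1 mind1]] := exists_min (ex_intro (fun j => Ib (idx m0 j)) d0 Id0).
have d1d0 : (d1 <= d0)%N by apply: mind1.
have d1p : (0 < d1)%N.
  rewrite lt0n; apply/eqP => e; move: Hd1; rewrite e idx0 => /IbP; exact: hm0.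
pose i := idx m0 d1.
have np : ~ is_interval_seg h1 h2 (s (ord_pred i)).
  rewrite /i -(prednK d1p) ord_pred_idxS => /IbP h.
  by have := mind1 _ h; lia.
have ex : exists j, (0 < j)%N && ~~ Ib (idx i j).
  exists (n - d1)%N; apply/andP; split; first lia.
  rewrite /i idx_add subnKC; last lia.
  by rewrite idxn; apply/negP => /IbP.
have [e [/andP [e0 He] mine]] := exists_min ex.
have en : (e <= n - d1)%N by apply: mine; rewrite subn_gt0 (leq_ltn_trans d1d0 hd0) /= idx_add subnKC ?idxn; [apply/negP => /IbP | lia].
exists [set idx i j | j : 'I_e.-1.+1], i, e.-1; split; first lia.
split; first by [].
split.
  move=> x /mem_arc [j [hj ->]].
  case: j hj => [|j] hj; first by apply/IbP.
  apply/IbP; apply/negPn/negP => nj; have := mine j.+1; rewrite nj /= => /(_ isT); lia.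
split => //.
rewrite -/(idx i e.-1.+1) prednK // => /IbP; exact/negP.
Qed.

Lemma arc_line (R : realFieldType) (h1 h2 : R) n (s : 'I_n -> segment R) A :
  h1 != h2 -> (2 <= n)%N -> IPSEG_rep_cycle h1 h2 s -> interval_arc h1 h2 s A ->
  (forall x, x \in A -> interval_on h1 (s x)) \/ (forall x, x \in A -> interval_on h2 (s x)).
Proof.
move=> h12 hn H /arc_data [i [k [hk eA hA _ _]]].
case: (hA 0%N (leq0n k)) => hi.
  left => x; rewrite eA => /mem_arc [j [hj ->]].
  exact: (run_line h12 hn H hi hA).
right => x; rewrite eA => /mem_arc [j [hj ->]].
have h21 : h2 != h1 by rewrite eq_sym.
exact: (run_line h21 hn (IPSEG_sym H) hi (fun j' hj' => iffLR (isint_sym _ _ _) (hA j' hj')) hj).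
Qed.

Lemma arc_sym (R : realFieldType) (h1 h2 : R) n (s : 'I_n -> segment R) A :
  interval_arc h1 h2 s A -> interval_arc h2 h1 s A.
Proof.
move=> [i [k [hk [eA [hall [n1 n2]]]]]]; exists i, k; split => //; split => //; split.
  by move=> x /hall /isint_sym.
by split => /isint_sym.
Qed.

Lemma arc_nonempty (R : realFieldType) (h1 h2 : R) n (s : 'I_n -> segment R) A :
  interval_arc h1 h2 s A -> exists x, x \in A.
Proof. by move=> /arc_data [i [k [_ eA _ _ _]]]; exists i; rewrite eA (in_arc i (leq0n k)). Qed.

Lemma on_both (R : realFieldType) (h1 h2 : R) (r : segment R) :
  h1 != h2 -> interval_on h1 r -> interval_on h2 r -> False.
Proof. by move=> h12 [e1 _] [e2 _]; move: h12; rewrite -e1 -e2 eqxx. Qed.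

Unset Implicit Arguments.
Unset Strict Implicit.

Theorem mainTheorem6 (R : realFieldType) (h1 h2 : R) (n : nat)
    (s : 'I_n -> segment R) :
  h1 != h2 ->
  (4 <= n)%N ->
  IPSEG_rep_cycle h1 h2 s ->
  (exists i : 'I_n, is_interval_seg h1 h2 (s i)) ->
  (exists A : {set 'I_n},
      interval_arc h1 h2 s A /\
      forall C, interval_arc h1 h2 s C -> C = A)
  \/
  (exists A B : {set 'I_n},
      A <> B /\ interval_arc h1 h2 s A /\ interval_arc h1 h2 s B /\
      (forall C, interval_arc h1 h2 s C -> C = A \/ C = B) /\
      (forall x, x \in A -> interval_on h1 (s x)) /\
      (forall x, x \in B -> interval_on h2 (s x))).
Proof.
move=> h12 hn H [i0 hi0].
have hn2 : (2 <= n)%N by lia.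
have h21 : h2 != h1 by rewrite eq_sym.
have [m0 hm0] : exists m0, ~ is_interval_seg h1 h2 (s m0).
  apply: NNPP => nx; apply: (all_interval_false i0 h12 hn H) => i.
  by apply: NNPP => ni; apply: nx; exists i.
have [A0 hA0] := arc_exists hi0 hm0.
have uniq1 : forall A C, interval_arc h1 h2 s A -> interval_arc h1 h2 s C ->
    (forall x, x \in A -> interval_on h1 (s x)) -> (forall x, x \in C -> interval_on h1 (s x)) -> A = C.
  by move=> A C hA hC; apply: (arc_uniq h12 hn H hA hC).
have uniq2 : forall A C, interval_arc h1 h2 s A -> interval_arc h1 h2 s C ->
    (forall x, x \in A -> interval_on h2 (s x)) -> (forall x, x \in C -> interval_on h2 (s x)) -> A = C.
  by move=> A C hA hC; apply: (arc_uniq h21 hn (IPSEG_sym H) (arc_sym hA) (arc_sym hC)).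
case: (classic (exists A, interval_arc h1 h2 s A /\ forall x, x \in A -> interval_on h1 (s x)))
  => [[A [hA LA]]|n1];
case: (classic (exists B, interval_arc h1 h2 s B /\ forall x, x \in B -> interval_on h2 (s x)))
  => [[B [hB LB]]|n2].
- right; exists A, B; split.
    move=> e; have [x hx] := arc_nonempty hA.
    apply: (on_both h12 (LA x hx)); apply: LB; by rewrite -e.
  do 2 (split => //); split => //.
  move=> C hC; case: (arc_line h12 hn2 H hC) => LC.
    by left; apply: uniq1.
  by right; apply: uniq2.
- left; exists A; split => // C hC; case: (arc_line h12 hn2 H hC) => LC.
    by apply: uniq1.
  by case: n2; exists C.
- left; exists B; split => // C hC; case: (arc_line h12 hn2 H hC) => LC.
    by case: n1; exists C.
  by apply: uniq2.
- exfalso; case: (arc_line h12 hn2 H hA0) => L.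
    by apply: n1; exists A0.
  by apply: n2; exists A0.
Qed.
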